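(* Let $T$ be a semigroup with identity acting by continuous surjections on compact metrizable spaces $X$ and $Y$, giving dynamical systems $(X,\alpha,T)$ and $(Y,\beta,T)$, and suppose $(Y,\beta,T)$ is a factor of $(X,\alpha,T)$. If $E(X,T)$ is completely regular then $E(Y,T)$ is completely regular.
   Context: A factor map is a continuous surjection $\pi:X\to Y$ with $\pi\circ\alpha^t=\beta^t\circ\pi$ for all $t$; $(Y,\beta,T)$ is a factor if such a map exists. $E(X,T)$ is the closure of $\{\alpha^t:t\in T\}$ in $X^X$ (pointwise convergence, composition), similarly $E(Y,T)$. A semigroup is completely regular if each element $a$ admits $x$ with $a=axa$, $ax=xa$. *)

(* Defs.v *)
From HB Require Import structures.
From mathcomp Require Import all_boot all_order all_algebra.
From mathcomp Require Import all_classical all_reals all_analysis.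
Set Implicit Arguments. Unset Strict Implicit. Unset Printing Implicit Defensive.
Local Open Scope classical_set_scope.

Definition is_monoid (T : Type) (op : T -> T -> T) (e : T) : Prop :=
  (forall r s t, op r (op s t) = op (op r s) t) /\
  (forall t, op e t = t) /\ (forall t, op t e = t).

Definition is_cont_surj_action (T : Type) (op : T -> T -> T) (e : T)
  (X : topologicalType) (alpha : T -> X -> X) : Prop :=
  alpha e = id /\
  (forall s t, alpha (op s t) = alpha s \o alpha t) /\
  (forall t, continuous (alpha t)) /\
  (forall t, forall y : X, exists x : X, alpha t x = y).

Definition is_factor_map (T : Type) (X Y : topologicalType)
  (alpha : T -> X -> X) (beta : T -> Y -> Y) (pi : X -> Y) : Prop :=
  continuous pi /\ (forall y : Y, exists x : X, pi x = y) /\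
  (forall t, pi \o alpha t = beta t \o pi).

Definition enveloping (T : Type) (X : topologicalType) (alpha : T -> X -> X)
  : set {ptws X -> X} :=
  closure (range alpha : set {ptws X -> X}).

Definition completely_regular (X : Type) (S : set (X -> X)) : Prop :=
  forall a, S a -> exists x, S x /\ a = a \o x \o a /\ a \o x = x \o a.

(* Main.v *)
Require Import Defs.
From HB Require Import structures.
From mathcomp Require Import all_boot all_order all_algebra.
From mathcomp Require Import all_classical all_reals all_analysis.
Local Open Scope classical_set_scope.

Lemma closure_img (U V : topologicalType) (f : U -> V) (S : set U) z :
  continuous f -> closure S z -> closure (f @` S) (f z).
Proof.
move=> fc cz B nB; have [w [Sw Bw]] := cz _ (fc z _ nB).
by exists (f w); split => //; exists w.
Qed.

Lemma fst_cont (U V : topologicalType) : continuous (@fst U V).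
Proof. by move=> [a b]; exact: cvg_fst. Qed.
Lemma snd_cont (U V : topologicalType) : continuous (@snd U V).
Proof. by move=> [a b]; exact: cvg_snd. Qed.

Lemma eval_cont (U V : topologicalType) (u : U) :
  continuous (fun f : {ptws U -> V} => f u).
Proof. exact: (@proj_continuous U (fun _ => V) u). Qed.

Lemma ptws_compact (U V : topologicalType) :
  compact [set: V] -> compact [set: {ptws U -> V}].
Proof.
move=> cV.
have := @tychonoff U (fun _ => V) (fun _ => setT) (fun _ => cV).
by congr compact; rewrite predeqE.
Qed.
Lemma ptws_hausdorff (U : topologicalType) (V : topologicalType) :
  hausdorff_space V -> hausdorff_space {ptws U -> V}.
Proof. move=> hV; exact: (@hausdorff_product U (fun _ => V)). Qed.

Theorem corollary3p4 (R : realType) (T : Type) (op : T -> T -> T) (e : T)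
  (X Y : metricType R) (alpha : T -> X -> X) (beta : T -> Y -> Y) :
  is_monoid op e ->
  compact [set: X] -> compact [set: Y] ->
  is_cont_surj_action op e alpha -> is_cont_surj_action op e beta ->
  (exists pi : X -> Y, is_factor_map alpha beta pi) ->
  completely_regular (enveloping alpha) ->
  completely_regular (enveloping beta).
Proof.
move=> _ cX cY _ _ [pi [pic [pis picomm]]] crX.
pose G : set ({ptws X -> X} * {ptws Y -> Y}) :=
  closure (range (fun t => ((alpha t : {ptws X -> X}), (beta t : {ptws Y -> Y})))).
have GC : forall z, G z -> forall x, z.2 (pi x) = pi (z.1 x).
  move=> z Gz x; apply: metric_hausdorff => A B nA nB.
  have n1 : nbhs z ((fun w : {ptws X -> X} * {ptws Y -> Y} => w.2 (pi x)) @^-1` A).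
    exact: (@snd_cont _ _ z _ (@eval_cont _ _ (pi x) z.2 _ nA)).
  have n2 : nbhs z ((fun w : {ptws X -> X} * {ptws Y -> Y} => pi (w.1 x)) @^-1` B).
    exact: (@fst_cont _ _ z _ (@eval_cont _ _ x z.1 _ (pic _ _ nB))).
  have [w [[t _ <-] [/= HA HB]]] := Gz _ (filterI n1 n2).
  exists (beta t (pi x)); split => //.
  by have := congr1 (fun f => f x) (picomm t) => /= <-.
have G1 : forall z, G z -> enveloping alpha z.1.
  move=> z Gz; have := @closure_img _ _ _ _ _ (@fst_cont _ _) Gz.
  by apply: closureS => _ [w [t _ <-] <-]; exists t.
have G2 : forall z, G z -> enveloping beta z.2.
  move=> z Gz; have := @closure_img _ _ _ _ _ (@snd_cont _ _) Gz.
  by apply: closureS => _ [w [t _ <-] <-]; exists t.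
have cG : compact G.
  have := compact_setX (@ptws_compact X X cX) (@ptws_compact Y Y cY).
  rewrite setXTT => h.
  by apply: (subclosed_compact (@closed_closure _ _) h).
have E1 : forall p, enveloping alpha p -> exists z, G z /\ z.1 = p.
  move=> p Ep.
  have cF : closed (fst @` G).
    apply: compact_closed; first exact: (@ptws_hausdorff X X (@metric_hausdorff _ X)).
    apply: continuous_compact cG; apply: continuous_subspaceT; exact: fst_cont.
  have : closure (fst @` G) p.
    apply: (closureS _ Ep) => _ [t _ <-].
    by exists (alpha t : {ptws X -> X}, beta t : {ptws Y -> Y}) => //; apply: subset_closure; exists t.
  by move/cF => [z Gz <-]; exists z.
have E2 : forall q, enveloping beta q -> exists z, G z /\ z.2 = q.
  move=> q Eq.
  have cF : closed (snd @` G).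
    apply: compact_closed; first exact: (@ptws_hausdorff Y Y (@metric_hausdorff _ Y)).
    apply: continuous_compact cG; apply: continuous_subspaceT; exact: snd_cont.
  have : closure (snd @` G) q.
    apply: (closureS _ Eq) => _ [t _ <-].
    by exists (alpha t : {ptws X -> X}, beta t : {ptws Y -> Y}) => //; apply: subset_closure; exists t.
  by move/cF => [z Gz <-]; exists z.
move=> b Eb.
have [[a b'] [Gz /= eb]] := E2 b Eb; subst b'.
have Ea := G1 _ Gz; have Ca := GC _ Gz; rewrite /= in Ea Ca.
have [x [Ex [axa ax]]] := crX a Ea.
have [[x' c] [Gz' /= ex]] := E1 x Ex; subst x'.
have Ec := G2 _ Gz'; have Cc := GC _ Gz'; rewrite /= in Ec Cc.
have surjeq : forall f g : Y -> Y, (forall u, f (pi u) = g (pi u)) -> f = g.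
  move=> f g H; apply: funext => y; have [u <-] := pis y; exact: H.
exists c; split => //; split; apply: surjeq => u /=.
- by rewrite !(Ca, Cc); have := congr1 (fun f => f u) axa => /= <-.
- by rewrite !(Ca, Cc); have := congr1 (fun f => f u) ax => /= ->.
Qed.
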